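(* For every integer $k\ge 2$, the renormalization constant $r_k$ of $SG_k$ satisfies $r_k>\dfrac{2}{3k}$.
   Context: Let $q_0,q_1,q_2$ be the vertices of an equilateral triangle $T$ in $\mathbb R^2$ with side length $1$. Fix $k\ge2$ and let $d=k(k+1)/2$. $SG_k$ is the self-similar set $K=\bigcup_{i=0}^{d-1}F_i(K)$. Here $F_i(x)=x/k+b_i$ are the similitudes mapping $T$ onto the $d$ triangles of side $1/k$ having the same orientation as $T$ in the subdivision of $T$ into $k^2$ such triangles. Set $V_0=\{q_0,q_1,q_2\}$ and $V_1=\bigcup_i F_i(V_0)$. The graph $\Gamma_1$ has vertex set $V_1$, with $x\sim_1 y$ iff $x\neq y$ and both lie in some $F_i(V_0)$. The complete graph on $V_0$ is $\Gamma_0$. With $\mathcal E_m(u)=r^{-m}\sum_{x\sim_m y}(u(x)-u(y))^2$, the renormalization constant $r_k>0$ is the unique $r$ such that for all $u:V_0\to\mathbb R$, $\min\{\mathcal E_1(\tilde u):\tilde u|_{V_0}=u\}=\mathcal E_0(u)$. *)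

(* Defs.v *)
From HB Require Import structures.
From mathcomp Require Import all_boot all_order all_algebra.
Set Implicit Arguments. Unset Strict Implicit. Unset Printing Implicit Defensive.
Import Order.TTheory GRing.Theory Num.Theory.
Local Open Scope ring_scope.

(* Encoding of SG_k, level 1.  Points of the triangle T with vertices
   q0, q1, q2 are described by lattice coordinates (a,b):
   the point q0 + (a/k)(q1 - q0) + (b/k)(q2 - q0).
   V_1 is exactly the set of lattice points with a,b >= 0, a + b <= k. *)
Definition vtx (k : nat) : Type := ('I_k.+1 * 'I_k.+1)%type.

(* The upward cell c = (i,j) (with i + j < k) is the image F_c(T): the
   triangle with vertices (i,j), (i+1,j), (i,j+1). These are exactly the
   d = k(k+1)/2 cells of side 1/k with the orientation of T. *)
Definition in_cell (k : nat) (c x : vtx k) : bool :=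
  [&& (c.1 + c.2 < k)%N &
   [|| (x.1 == c.1 :> nat) && (x.2 == c.2 :> nat),
       (x.1 == c.1.+1 :> nat) && (x.2 == c.2 :> nat) |
       (x.1 == c.1 :> nat) && (x.2 == c.2.+1 :> nat)]].

Definition inV1 (k : nat) (x : vtx k) : bool := [exists c : vtx k, in_cell c x].

Definition adj1 (k : nat) (x y : vtx k) : bool :=
  (x != y) && [exists c : vtx k, in_cell c x && in_cell c y].

Definition corner (k : nat) (i : 'I_3) : vtx k :=
  if (i == 0 :> nat) then (ord0, ord0)
  else if (i == 1 :> nat) then (ord_max, ord0)
  else (ord0, ord_max).

(* E_0(u) = sum over unordered pairs {x,y} of V_0 with x <> y
   (written as half the sum over ordered pairs). *)
Definition E0 (R : realFieldType) (u : 'I_3 -> R) : R :=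
  2^-1 * \sum_(i : 'I_3) \sum_(j : 'I_3 | i != j) (u i - u j) ^+ 2.

Definition E1 (R : realFieldType) (k : nat) (r : R) (v : vtx k -> R) : R :=
  r^-1 * (2^-1 * \sum_(x : vtx k) \sum_(y : vtx k | adj1 x y) (v x - v y) ^+ 2).

Definition extends (R : realFieldType) (k : nat) (u : 'I_3 -> R) (v : vtx k -> R) : Prop :=
  forall i : 'I_3, v (corner k i) = u i.

Definition is_renorm_const (R : realFieldType) (k : nat) (r : R) : Prop :=
  forall u : 'I_3 -> R,
    (exists v : vtx k -> R, @extends R k u v /\ E1 r v = E0 u) /\
    (forall v : vtx k -> R, @extends R k u v -> E0 u <= E1 r v).

(* Main.v *)
Require Import Defs.
From HB Require Import structures.
From mathcomp Require Import all_boot all_order all_algebra ring lra zify.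
Import Order.TTheory GRing.Theory Num.Theory.
Local Open Scope ring_scope.
Lemma cs_tel (R : realFieldType) k (t : nat -> R) : (0<k)%N -> t 0%N = 1 -> t k = 0 ->
  k%:R^-1 <= \sum_(a < k) (t a - t a.+1)^+2.
Proof.
move=> k0 t0 tk.
have tel : \sum_(a < k) (t a - t a.+1) = 1.
  have := telescope_sumr t (leq0n k); rewrite t0 tk big_mkord => H.
  have -> : \sum_(a < k) (t a - t a.+1) = - \sum_(a < k) (t a.+1 - t a).
    by rewrite -sumrN; apply: eq_bigr => i _; ring.
  rewrite H; ring.
set c := k%:R^-1.
have kc : k%:R * c = 1 by rewrite /c mulfV // pnatr_eq0 -lt0n.
have H0 : 0 <= \sum_(a < k) (t a - t a.+1 - c)^+2 by apply: sumr_ge0 => i _; exact: sqr_ge0.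
have E : \sum_(a < k) (t a - t a.+1 - c)^+2 = \sum_(a < k) (t a - t a.+1)^+2 - (c *+ 2) * \sum_(a<k) (t a - t a.+1) + \sum_(a<k) c^+2.
  rewrite mulr_sumr -sumrB -big_split /=; apply eq_bigr => i _; ring.
rewrite E sumr_const card_ord tel in H0.
have e2 : c^+2 *+ k = c by rewrite -mulr_natl expr2 mulrA kc mul1r.
move: H0; rewrite e2.
move=> H0; lra.
Qed.
Lemma sum_inj_le (R : numDomainType) (I J : finType) (phi : I -> J) (F : J -> R) :
  injective phi -> (forall j, 0 <= F j) -> \sum_i F (phi i) <= \sum_j F j.
Proof.
move=> inj F0.
rewrite (bigID (mem (phi @: setT))) /=.
have -> : \sum_(i | true && (i \in phi @: setT)) F i = \sum_(i in phi @: setT) F i by [].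
rewrite big_imset /=; last by move=> x y _ _; apply: inj.
rewrite -[X in X <= _]addr0; apply: lerD.
  by rewrite le_eqVlt; apply/orP; left; apply/eqP; apply: eq_bigl => i; rewrite inE.
by apply: sumr_ge0.
Qed.

Definition bot k (a : nat) : vtx k := (inord a, ord0).
Definition lef k (a : nat) : vtx k := (ord0, inord a).
Definition phi k (q : 'I_4 * 'I_k) : vtx k * vtx k :=
  match val q.1 with
  | 0%N => (bot k q.2, bot k q.2.+1)
  | 1%N => (bot k q.2.+1, bot k q.2)
  | 2%N => (lef k q.2, lef k q.2.+1)
  | _ => (lef k q.2.+1, lef k q.2) end.

Lemma vi k (a : nat) : (a <= k)%N -> nat_of_ord (inord a : 'I_k.+1) = a.
Proof. by move=> h; rewrite inordK. Qed.

Lemma adj1C k (x y : vtx k) : Defs.adj1 x y -> Defs.adj1 y x.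
Proof.
rewrite /Defs.adj1 eq_sym => /andP [-> /existsP [c /andP [h1 h2]]] /=.
by apply/existsP; exists c; rewrite h1 h2.
Qed.

Lemma adj_bot k a : (a < k)%N -> Defs.adj1 (bot k a) (bot k a.+1).
Proof.
move=> ak; rewrite /Defs.adj1 /bot; apply/andP; split.
  apply/eqP => /(congr1 (fun p => val p.1)) /=; rewrite !vi //; [lia | lia].
apply/existsP; exists (bot k a); rewrite /in_cell /bot /= !vi //; try lia.
Qed.

Lemma adj_lef k a : (a < k)%N -> Defs.adj1 (lef k a) (lef k a.+1).
Proof.
move=> ak; rewrite /Defs.adj1 /lef; apply/andP; split.
  apply/eqP => /(congr1 (fun p => val p.2)) /=; rewrite !vi //; [lia | lia].
apply/existsP; exists (lef k a); rewrite /in_cell /lef /= !vi //; try lia.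
Qed.

Lemma phi_inj k : injective (@phi k).
Proof.
move=> [[d1 hd1] a1] [[d2 hd2] a2]; rewrite /phi /=.
have v1 := ltn_ord a1; have v2 := ltn_ord a2.
case: d1 hd1 => [|[|[|[|d1]]]] hd1 //; case: d2 hd2 => [|[|[|[|d2]]]] hd2 //.
all: rewrite /bot /lef => /(congr1 (fun p => (nat_of_ord p.1.1, nat_of_ord p.1.2, nat_of_ord p.2.1, nat_of_ord p.2.2))) /=.
all: case; intros; repeat match goal with H : context[nat_of_ord (inord ?a)] |- _ => rewrite vi in H; [|lia] end;
  try lia;
  (congr pair; apply: val_inj => /=; lia).
Qed.

Theorem lemma2p2 (R : realFieldType) (k : nat) (hk : (2 <= k)%N) (r : R) (hr : 0 < r) :
  is_renorm_const k r -> 2 / (3 * k%:R) < r.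
Proof.
pose u := fun i : 'I_3 => if (i == 0 :> nat) then 1 else 0 : R.
move=> /(_ u) [[v [ext Ev]] _].
have E0u : E0 u = 2.
  rewrite /E0 /u; under eq_bigr do rewrite big_mkcond; rewrite !big_ord_recl !big_ord0 /=.
  by field.
have k0 : (0 < k)%N by lia.
have bot0 : bot k 0 = (ord0, ord0) by rewrite /bot; congr pair; apply: val_inj; rewrite /= inordK.
have botk : bot k k = (ord_max, ord0) by rewrite /bot; congr pair; apply: val_inj; rewrite /= inordK.
have lef0 : lef k 0 = (ord0, ord0) by rewrite /lef; congr pair; apply: val_inj; rewrite /= inordK.
have lefk : lef k k = (ord0, ord_max) by rewrite /lef; congr pair; apply: val_inj; rewrite /= inordK.
have t0 : v (bot k 0) = 1 by rewrite bot0; have := ext ord0; rewrite /corner /u /=.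
have tk : v (bot k k) = 0 by rewrite botk; have := ext (@Ordinal 3 1 isT); rewrite /corner /u /=.
have s0 : v (lef k 0) = 1 by rewrite lef0; have := ext ord0; rewrite /corner /u /=.
have sk : v (lef k k) = 0 by rewrite lefk; have := ext (@Ordinal 3 2 isT); rewrite /corner /u /=.
set S := \sum_(x : vtx k) \sum_(y : vtx k | Defs.adj1 x y) (v x - v y) ^+ 2.
have Sge : 4 * k%:R^-1 <= S.
  pose G := fun p : vtx k * vtx k => if Defs.adj1 p.1 p.2 then (v p.1 - v p.2)^+2 else 0.
  have -> : S = \sum_p G p by rewrite /S; under eq_bigr do rewrite big_mkcond; rewrite pair_big.
  apply: (le_trans _ (@sum_inj_le _ _ _ _ G (@phi_inj k) _)); last first.
    by move=> p; rewrite /G; case: ifP => // _; exact: sqr_ge0.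
  have -> : \sum_q G (phi k q) = \sum_(d < 4) \sum_(a < k) G (phi k (d, a)).
    by rewrite pair_big; apply: eq_bigr => -[d a] _.
  rewrite !big_ord_recl big_ord0 /phi /G /=.
  rewrite [X in _ <= X + _](eq_bigr (fun a : 'I_k => (v (bot k a) - v (bot k a.+1))^+2)); last first.
    by move=> a _; rewrite adj_bot.
  rewrite [X in _ <= _ + (X + _)](eq_bigr (fun a : 'I_k => (v (bot k a) - v (bot k a.+1))^+2)); last first.
    by move=> a _; rewrite (@adj1C k _ _ (@adj_bot k a (ltn_ord a))) -opprB sqrrN.
  rewrite [X in _ <= _ + (_ + (X + _))](eq_bigr (fun a : 'I_k => (v (lef k a) - v (lef k a.+1))^+2)); last first.
    by move=> a _; rewrite adj_lef.
  rewrite [X in _ <= _ + (_ + (_ + (X + _)))](eq_bigr (fun a : 'I_k => (v (lef k a) - v (lef k a.+1))^+2)); last first.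
    by move=> a _; rewrite (@adj1C k _ _ (@adj_lef k a (ltn_ord a))) -opprB sqrrN.
  have hB := @cs_tel R k (fun a => v (bot k a)) k0 t0 tk.
  have hL := @cs_tel R k (fun a => v (lef k a)) k0 s0 sk.
  rewrite /= in hB hL; lra.
have rn : r != 0 by rewrite gt_eqF.
rewrite E0u /E1 -/S in Ev.
have Sr : S = 4 * r.
  have -> : S = r * 2 * (r^-1 * (2^-1 * S)) by field.
  rewrite Ev; ring.
have kpos : 0 < k%:R^-1 :> R by rewrite invr_gt0 ltr0n.
have -> : 2 / (3 * k%:R) = 2 / 3 * k%:R^-1 :> R by rewrite invfM mulrA.
rewrite Sr in Sge; lra.
Qed.
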